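(* Let $\Omega$ be the closure of a bounded domain in $\mathbb{R}^d$ and let $X$ be a Banach space of functions on $\Omega$ with $C(\Omega)\subset X$ and $\|g\|_X\le C_X\|g\|_{C(\Omega)}$ for $g\in C(\Omega)$. Let $Y$ be a linear subspace of $C(\Omega)$ with norm $\|\cdot\|_Y$ such that $K:=U(Y)=\{g\in Y:\|g\|_Y\le1\}$ is a compact subset of $C(\Omega)$, and let $C_Y$ be such that $\|g\|_{C(\Omega)}\le C_Y$ for all $g\in K$. Let ${\bf x}=(x_1,\dots,x_m)\in\Omega^m$, $f\in K$, $w:=\lambda_{\bf x}(f)$, and assume $R(K_w)_X\neq0$. For $\mu>0$ define on $C(\Omega)$ $$\mathcal{L}_\mu(g):=\|\lambda_{\bf x}(g)-w\|+\mu\|g\|_Y .$$ Let $C>2$, and let $\mu>0$, $\delta>0$ satisfy $\delta\le\mu^2$ and $$C_X\varepsilon+2R(K(w,2\varepsilon))_X\le C\,R(K_w)_X,\qquad\varepsilon:=\mu\max(\mu+1,C_Y)$$ (this holds for all sufficiently small $\mu$). Let $\Sigma\subset C(\Omega)$ satisfy $\operatorname{dist}(K,\Sigma\cap K)_{C(\Omega)}<\delta$ and let $\hat f\in\mathop{\rm argmin}_{g\in\Sigma}\mathcal{L}_\mu(g)$ be any minimizer. Then $\|f-\hat f\|_X\le C\,R(K_w)_X$.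
   Context: Convention: $\|g\|_Y:=\infty$ if $g\notin Y$. $\lambda_{\bf x}(g):=(g(x_1),\dots,g(x_m))$; on $\mathbb{R}^m$, $\|v\|:=\big[\frac1m\sum_{j=1}^m|v_j|^2\big]^{1/2}$. For $A,B\subset C(\Omega)$, $\operatorname{dist}(A,B)_{C(\Omega)}:=\sup_{a\in A}\inf_{b\in B}\|a-b\|_{C(\Omega)}$. $K_{w'}:=\{h\in K:\lambda_{\bf x}(h)=w'\}$, $K(w,\varepsilon):=\bigcup_{w'\in\mathbb{R}^m,\ \|w'-w\|\le\varepsilon}K_{w'}$. For $S\subset X$, $R(S)_X:=\inf\{r:\ S\subset B(z,r)_X\text{ for some }z\in X\}$ (Chebyshev radius in $X$). *)

(* Defs.v *)
From HB Require Import structures.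
From mathcomp Require Import all_boot all_order all_algebra.
From mathcomp Require Import all_classical all_reals all_analysis.
From Stdlib Require List.
Export Order.TTheory GRing.Theory Num.Theory.
Export numFieldNormedType.Exports.
Set Implicit Arguments. Unset Strict Implicit. Unset Printing Implicit Defensive.
Local Open Scope classical_set_scope.
Local Open Scope ring_scope.

Section Defs.
Variables (R : realType) (d : nat).
Notation Fn := ('rV[R]_d -> R).

Definition contOn (Om : set 'rV[R]_d) (g : Fn) : Prop := {within Om, continuous g}.

Definition supC (Om : set 'rV[R]_d) (g : Fn) : R := sup [set `|g x| | x in Om].

Definition openC (Om : set 'rV[R]_d) (U : set Fn) : Prop :=
  forall g, contOn Om g -> U g ->
    exists2 r : R, 0 < r & forall h, contOn Om h ->
      supC Om (fun t => h t - g t) < r -> U h.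

Definition compactC (Om : set 'rV[R]_d) (K : set Fn) : Prop :=
  K `<=` contOn Om /\
  forall (I : Type) (U : I -> set Fn), (forall i, openC Om (U i)) ->
    (forall g, K g -> exists i, U i g) ->
    exists s : seq I, forall g, K g -> exists i, List.In i s /\ U i g.

Definition distC (Om : set 'rV[R]_d) (A B : set Fn) : \bar R :=
  ereal_sup [set ereal_inf [set (supC Om (fun t => a t - b t))%:E | b in B]
            | a in A].

(* Chebyshev radius of S in X, where C(Om) sits in X via iota *)
Definition chebR (X : normedModType R) (iota : Fn -> X) (S : set Fn) : \bar R :=
  ereal_inf [set r%:E | r in
    [set r : R | exists z : X, forall s, S s -> `|iota s - z| < r]].

Variable m : nat.

Definition lam (xs : 'I_m -> 'rV[R]_d) (g : Fn) : 'I_m -> R := fun j => g (xs j).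

Definition enormm (v : 'I_m -> R) : R :=
  Num.sqrt ((m%:R)^-1 * \sum_(j < m) `|v j| ^+ 2).

Definition Kw (K : set Fn) (xs : 'I_m -> 'rV[R]_d) (w' : 'I_m -> R) : set Fn :=
  [set h | K h /\ lam xs h = w'].

Definition Kwe (K : set Fn) (xs : 'I_m -> 'rV[R]_d) (w : 'I_m -> R) (e : R)
  : set Fn :=
  \bigcup_(w' in [set w' : 'I_m -> R | enormm (fun j => w' j - w j) <= e])
     Kw K xs w'.

Definition unitY (Ys : set Fn) (nY : Fn -> R) : set Fn :=
  [set g | Ys g /\ nY g <= 1].

(* L_mu(g), with ||g||_Y = +oo when g is not in Y *)
Definition Lmu (Ys : set Fn) (nY : Fn -> R) (xs : 'I_m -> 'rV[R]_d)
  (w : 'I_m -> R) (mu : R) (g : Fn) : \bar R :=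
  if `[< Ys g >] then (enormm (fun j => lam xs g j - w j) + mu * nY g)%:E
  else +oo%E.

End Defs.

(* Main.v *)
Require Import Defs.
From HB Require Import structures.
From mathcomp Require Import all_boot all_order all_algebra.
From mathcomp Require Import all_classical all_reals all_analysis.
From mathcomp Require Import ring lra.
Import Order.TTheory GRing.Theory Num.Theory.
Import numFieldNormedType.Exports.
Local Open Scope classical_set_scope.
Local Open Scope ring_scope.
Set Implicit Arguments. Unset Strict Implicit.
Lemma Om_compact (R : realType) d (D : set 'rV[R]_d) :
  bounded_set D -> compact (closure D).
Proof.
move=> [M [Mreal HM]].
have HM1 := HM (M + 1) (ltr_pwDr ltr01 (lexx M)).
apply: bounded_closed_compact; last exact: closed_closure.
have sub : closure D `<=` closed_ball_ Num.Def.normr (0 : 'rV[R]_d) (M + 1).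
  have := @closed_closed_ball_ R _ (0 : 'rV[R]_d) (M + 1); rewrite closure_id => ->.
  apply: closureS => x /HM1 /=; rewrite /closed_ball_ /= sub0r normrN.
  by [].
exists (M + 1); split; first by rewrite realD ?real1.
move=> y hy x /sub; rewrite /closed_ball_ /= sub0r normrN => h.
by rewrite (le_trans h) // ltW.
Qed.

Lemma cont_bnd (R : realType) d (Om : set 'rV[R]_d) (g : 'rV[R]_d -> R) :
  compact Om -> contOn Om g -> exists M, forall x, Om x -> `|g x| <= M.
Proof.
move=> cOm cg.
have := compact_bounded (continuous_compact cg cOm).
move=> [M [Mreal HM]].
exists (M + 1) => x Ox.
have HM1 := HM (M + 1) (ltr_pwDr ltr01 (lexx M)). by apply: HM1; exists x.
Qed.

Lemma supC_ge (R : realType) d (Om : set 'rV[R]_d) (g : 'rV[R]_d -> R) M x :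
  (forall y, Om y -> `|g y| <= M) -> Om x -> `|g x| <= supC Om g.
Proof.
move=> HM Ox; apply: ub_le_sup; last by exists x.
by exists M => _ [y Oy <-]; exact: HM.
Qed.

Lemma supC_le (R : realType) d (Om : set 'rV[R]_d) (g : 'rV[R]_d -> R) B x0 :
  Om x0 -> (forall y, Om y -> `|g y| <= B) -> supC Om g <= B.
Proof.
move=> O0 HB; apply: ge_sup; first by exists `|g x0|, x0.
by move=> _ [y Oy <-]; exact: HB.
Qed.

Lemma enorm_le_pt (R : realType) m (v : 'I_m -> R) (B : R) :
  0 <= B -> (forall j, `|v j| <= B) -> enormm v <= B.
Proof.
move=> B0 Hv; rewrite /enormm -(ger0_norm B0) -sqrtr_sqr ler_sqrt ?exprn_ge0 //.
have : \sum_(j < m) `|v j| ^+ 2 <= m%:R * B ^+ 2.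
  have -> : m%:R * B ^+ 2 = \sum_(j < m) B ^+ 2 by rewrite sumr_const card_ord mulr_natl.
  apply: ler_sum => j _.
  by rewrite lerXn2r ?nnegrE.
case: m v Hv => [|n] v Hv H; first by rewrite invr0 mul0r exprn_ge0.
rewrite ler_pdivrMl ?ltr0n //.
Qed.

Lemma enorm_tri (R : realType) m (u v z : 'I_m -> R) (e1 e2 : R) :
  0 < e1 -> 0 < e2 -> (forall j, z j = u j + v j) ->
  enormm u <= e1 -> enormm v <= e2 -> enormm z <= e1 + e2.
Proof.
move=> e10 e20 Hz; rewrite /enormm.
set Su := _ * \sum_(j < m) _; set Sv := _ * \sum_(j < m) _.
have Su0 : 0 <= Su by rewrite mulr_ge0 ?invr_ge0 ?ler0n ?sumr_ge0 // => j _; rewrite exprn_ge0.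
have Sv0 : 0 <= Sv by rewrite mulr_ge0 ?invr_ge0 ?ler0n ?sumr_ge0 // => j _; rewrite exprn_ge0.
move=> hu0 hv0.
have hu : Su <= e1 ^+ 2.
  by rewrite -(sqr_sqrtr Su0) lerXn2r ?nnegrE ?sqrtr_ge0 // ltW.
have hv : Sv <= e2 ^+ 2.
  by rewrite -(sqr_sqrtr Sv0) lerXn2r ?nnegrE ?sqrtr_ge0 // ltW.
set Sz := _ * \sum_(j < m) _.
suff HS : Sz <= (e1 + e2) ^+ 2.
  rewrite -[e1 + e2]ger0_norm; last by rewrite addr_ge0 // ltW.
  rewrite -[`|e1 + e2|]sqrtr_sqr ler_sqrt ?exprn_ge0 //; first by rewrite addr_ge0 // ltW.
rewrite /Sz.
set s := e2 / e1.
have s0 : 0 < s by rewrite divr_gt0.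
have key : forall a b : R, `|a + b| ^+ 2 <= (1 + s) * `|a| ^+ 2 + (1 + s^-1) * `|b| ^+ 2.
  move=> a b; rewrite !real_normK ?num_real //.
  have : 0 <= s * (a - b / s) ^+ 2 by rewrite mulr_ge0 ?sqr_ge0 // ltW.
  have sn0 : s != 0 by rewrite gt_eqF.
  suff -> : s * (a - b / s) ^+ 2 = (1 + s) * a ^+ 2 + (1 + s^-1) * b ^+ 2 - (a + b) ^+ 2.
    by rewrite subr_ge0.
  by field.
have : \sum_(j < m) `|z j| ^+ 2 <= (1 + s) * \sum_(j < m) `|u j| ^+ 2 + (1 + s^-1) * \sum_(j < m) `|v j| ^+ 2.
  rewrite !mulr_sumr -big_split /=; apply: ler_sum => j _; rewrite Hz; exact: key.
move=> H.
have mi0 : 0 <= (m%:R : R)^-1 by rewrite invr_ge0 ler0n.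
apply: (le_trans (ler_wpM2l mi0 H)).
rewrite mulrDr mulrCA [X in _ + X]mulrCA -/Su -/Sv.
apply: (le_trans (lerD (ler_wpM2l _ hu) (ler_wpM2l _ hv))).
- by rewrite addr_ge0 ?ltW.
- by rewrite addr_ge0 ?invr_ge0 ?ltW.
rewrite /s; have e1n : e1 != 0 by rewrite gt_eqF.
have e2n : e2 != 0 by rewrite gt_eqF.
rewrite le_eqVlt; apply/orP; left; apply/eqP; field; by rewrite ?e1n ?e2n.
Qed.

Lemma cheb2 (R : realType) d (X : normedModType R) (iota : ('rV[R]_d -> R) -> X)
  (S : set ('rV[R]_d -> R)) s1 s2 :
  S s1 -> S s2 -> ((`|iota s1 - iota s2|)%:E <= 2%:E * chebR iota S)%E.
Proof.
move=> S1 S2.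
have h : ((`|iota s1 - iota s2| / 2)%:E <= chebR iota S)%E.
  apply: le_ereal_inf_tmp => _ [r [z Hz] <-]; rewrite lee_fin.
  have h1 := Hz s1 S1; have h2 := Hz s2 S2.
  have h3 : `|iota s1 - iota s2| <= `|iota s1 - z| + `|iota s2 - z|.
    by rewrite (distrC (iota s2)); exact: ler_distD.
  lra.
have := lee_wpmul2l (lee0n 2) h.
by rewrite -EFinM mulrC divfK ?pnatr_eq0.
Qed.

Unset Implicit Arguments.
Theorem theorem4p4 (R : realType) (d m : nat)
  (D Om : set 'rV[R]_d)
  (X : completeNormedModType R) (iota : ('rV[R]_d -> R) -> X) (CX : R)
  (Ys : set ('rV[R]_d -> R)) (nY : ('rV[R]_d -> R) -> R) (CY : R)
  (xs : 'I_m -> 'rV[R]_d) (f : 'rV[R]_d -> R)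
  (mu delta C : R) (Sigma : set ('rV[R]_d -> R)) (fhat : 'rV[R]_d -> R) :
  (* Om is the closure of a bounded domain *)
  open D -> connected D -> bounded_set D -> D !=set0 -> Om = closure D ->
  (* C(Om) is (linearly, injectively) contained in the Banach space X *)
  (forall (a : R) g h, contOn Om g -> contOn Om h ->
      iota (fun t => a * g t + h t) = a *: iota g + iota h) ->
  (forall g, contOn Om g -> iota g = 0 -> forall t, Om t -> g t = 0) ->
  (forall g, contOn Om g -> `|iota g| <= CX * supC Om g) ->
  (* Y is a linear subspace of C(Om) with a norm *)
  Ys `<=` contOn Om ->
  Ys (fun _ => 0) ->
  (forall (a : R) g h, Ys g -> Ys h -> Ys (fun t => a * g t + h t)) ->
  (forall g h, Ys g -> (forall t, Om t -> g t = h t) -> Ys h) ->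
  (forall g, Ys g -> 0 <= nY g) ->
  (forall g, Ys g -> nY g = 0 <-> forall t, Om t -> g t = 0) ->
  (forall (a : R) g, Ys g -> nY (fun t => a * g t) = `|a| * nY g) ->
  (forall g h, Ys g -> Ys h -> nY (fun t => g t + h t) <= nY g + nY h) ->
  (* K = U(Y) is compact in C(Om), bounded by CY *)
  compactC Om (unitY Ys nY) ->
  (forall g, unitY Ys nY g -> supC Om g <= CY) ->
  (* data *)
  (forall j, Om (xs j)) ->
  unitY Ys nY f ->
  (chebR iota (Kw (unitY Ys nY) xs (lam xs f)) != 0)%E ->
  2 < C -> 0 < mu -> 0 < delta -> delta <= mu ^+ 2 ->
  ((CX * (mu * Num.max (mu + 1) CY))%R%:E
     + 2%:E * chebR iota (Kwe (unitY Ys nY) xs (lam xs f)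
                            (2 * (mu * Num.max (mu + 1) CY))%R)
   <= C%:E * chebR iota (Kw (unitY Ys nY) xs (lam xs f)))%E ->
  Sigma `<=` contOn Om ->
  (distC Om (unitY Ys nY) (Sigma `&` unitY Ys nY) < delta%:E)%E ->
  Sigma fhat ->
  (forall g, Sigma g ->
     (Lmu Ys nY xs (lam xs f) mu fhat <= Lmu Ys nY xs (lam xs f) mu g)%E) ->
  ((`|iota (fun t => f t - fhat t)|)%:E
     <= C%:E * chebR iota (Kw (unitY Ys nY) xs (lam xs f)))%E.
Proof.
move=> oD cD bD [x0 Dx0] eOm ilin iinj ibnd YsC Ys0 Ylin Yext nY0 nYdef nYsc nYtri
  Kc KCY xsOm Kf cheb0 C2 mu0 de0 demu Hcheb SigC Hdist Sfhat Hmin.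
set K := unitY Ys nY.
set eps := mu * Num.max (mu + 1) CY.
have Ox0 : Om x0 by rewrite eOm; exact: subset_closure.
have cOm : compact Om by rewrite eOm; exact: Om_compact.
have CX0 : 0 <= CX.
  have c1 : contOn Om (fun _ => 1) by apply: continuous_subspaceT; exact: cst_continuous.
  have h := ibnd _ c1.
  have s1 : 1 <= supC Om (fun _ => 1 : R).
    have hb : forall y, Om y -> `|(fun _ => 1 : R) y| <= 1 by move=> y _; rewrite normr1.
    have := @supC_ge R d Om (fun _ => 1) 1 x0 hb Ox0.
    by rewrite normr1.
  have h0 := normr_ge0 (iota (fun _ => 1)).
  nra.
have [g [Sg Kg] hg] : exists2 g, (Sigma `&` K) g & supC Om (fun t => f t - g t) < delta.
  have : (ereal_inf [set (supC Om (fun t => f t - b t))%:E | b in Sigma `&` K] < delta%:E)%E.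
    apply: le_lt_trans Hdist; apply: ereal_sup_ubound; by exists f.
  by case/ereal_inf_lt => _ [g Sg <-]; rewrite lte_fin => hg; exists g.
have cf : contOn Om f by apply: YsC; case: Kf.
have cg : contOn Om g by apply: YsC; case: Kg.
have [Mf hMf] := cont_bnd cOm cf.
have [Mg hMg] := cont_bnd cOm cg.
have ptg : forall j, `|lam xs g j - lam xs f j| <= delta.
  move=> j; rewrite /lam distrC; apply: ltW; apply: le_lt_trans hg.
  apply: (@supC_ge R d Om (fun t => f t - g t) (Mf + Mg)) => // y Oy.
  apply: (le_trans (ler_normB _ _)); exact: lerD (hMf y Oy) (hMg y Oy).
have Lg : (Lmu Ys nY xs (lam xs f) mu g <= (delta + mu)%:E)%E.
  rewrite /Lmu (asboolT Kg.1) lee_fin.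
  apply: lerD; first exact: enorm_le_pt (ltW de0) ptg.
  have := Kg.2; nra.
have Lf := le_trans (Hmin g Sg) Lg.
have Yfh : Ys fhat.
  by move: Lf; rewrite /Lmu; case: asboolP.
move: Lf; rewrite /Lmu (asboolT Yfh) lee_fin => Lf.
set a := enormm _ in Lf.
set t := nY fhat in Lf.
have a0 : 0 <= a by exact: sqrtr_ge0.
have t0 : 0 <= t by exact: nY0.
set t' := Num.max t 1.
have t'1 : 1 <= t' by rewrite le_max lexx orbT.
have t't : t <= t' by rewrite le_max lexx.
have t'0 : 0 < t' by apply: lt_le_trans t'1.
have t'mu : t' - 1 <= mu.
  rewrite /t'; have [ht|ht] := leP t 1; first by rewrite subrr ltW.
  nra.
set g' := fun x => t'^-1 * fhat x.
have Yg' : Ys g'.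
  apply: (Yext (fun x => t'^-1 * fhat x + 0)); first exact: Ylin.
  by move=> x _; rewrite addr0.
have nYg' : nY g' <= 1.
  rewrite /g' nYsc // ger0_norm; last by rewrite invr_ge0 ltW.
  by rewrite ler_pdivrMl // mulr1.
have Kg' : K g' by split.
have cfh : contOn Om fhat by exact: YsC.
have cg' : contOn Om g' by exact: YsC.
have [Mg' hMg'] := cont_bnd cOm cg'.
have g'CY : forall x, Om x -> `|g' x| <= CY.
  move=> x Ox; apply: le_trans (KCY _ Kg').
  exact: (@supC_ge R d Om g' Mg').
have CY0 : 0 <= CY by apply: le_trans (g'CY _ Ox0).
have ptd : forall x, `|g' x - fhat x| <= (t' - 1) * `|g' x|.
  move=> x.
  have e : fhat x = t' * g' x by rewrite /g' mulrA divff ?mul1r // gt_eqF.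
  rewrite e -{1}(mul1r (g' x)) -mulrBl normrM distrC [`|t' - 1|]ger0_norm //.
  by rewrite subr_ge0.
have ptd2 : forall x, Om x -> `|g' x - fhat x| <= mu * CY.
  move=> x Ox; apply: le_trans (ptd x) _.
  have := g'CY x Ox; have := normr_ge0 (g' x).
  nra.
have mx1 : mu + 1 <= Num.max (mu + 1) CY by rewrite le_max lexx.
have mx2 : CY <= Num.max (mu + 1) CY by rewrite le_max lexx orbT.
have eps0 : 0 < eps by rewrite /eps; nra.
have muCY : mu * CY <= eps by rewrite /eps; nra.
have mumu : mu ^+ 2 + mu <= eps by rewrite /eps; nra.
have Kwe_g' : Kwe K xs (lam xs f) (2 * eps) g'.
  exists (lam xs g'); last by split.
  rewrite /=.
  have -> : 2 * eps = eps + eps by lra.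
  apply: (@enorm_tri R m (fun j => lam xs fhat j - lam xs f j)
                        (fun j => lam xs g' j - lam xs fhat j)) => //.
  - by move=> j; rewrite /lam; lra.
  - rewrite -/a; nra.
  - apply: enorm_le_pt; first exact: ltW.
    move=> j; apply: le_trans muCY; exact: ptd2.
have Kwe_f : Kwe K xs (lam xs f) (2 * eps) f.
  exists (lam xs f); last by split.
  rewrite /=; apply: enorm_le_pt; first lra.
  by move=> j; rewrite subrr normr0; lra.
have H1 := cheb2 iota Kwe_f Kwe_g'.
have cdiff : forall u v, Ys u -> Ys v -> contOn Om (fun t => u t - v t).
  move=> u v Yu Yv; apply: YsC.
  apply: (Yext (fun t => -1 * v t + u t)); first exact: Ylin.
  by move=> x _; rewrite mulN1r addrC.
have ilin2 : forall u v, contOn Om u -> contOn Om v ->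
    iota (fun t => u t - v t) = iota u - iota v.
  move=> u v cu cv.
  have -> : (fun t => u t - v t) = (fun t => -1 * v t + u t).
    by apply/funext => x; rewrite mulN1r addrC.
  by rewrite ilin // scaleN1r addrC.
have H2 : `|iota g' - iota fhat| <= CX * eps.
  rewrite -ilin2 //; apply: le_trans (ibnd _ (cdiff _ _ Yg' Yfh)) _.
  apply: ler_wpM2l => //; apply: le_trans muCY.
  by apply: (supC_le Ox0) => y Oy; exact: ptd2.
rewrite ilin2 //.
apply: le_trans Hcheb.
apply: (@le_trans _ _ ((`|iota f - iota g'| + `|iota g' - iota fhat|)%:E)).
  by rewrite lee_fin; exact: ler_distD.
by rewrite EFinD addeC; apply: leeD => //; rewrite lee_fin.
Qed.
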